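(* The center of $SV\#_\alpha G$ equals the invariant subalgebra $(SV)^G$, and $(SV)^G$ is generated as an algebra by $x_1^\ell,\ldots,x_n^\ell$ and $x_1x_2\cdots x_n$.
   Context: Fix integers $n\ge 3$ and $\ell\ge 2$, and let $\zeta$ be a primitive $\ell$-th root of unity. Let $V=\mathbb{C}^n$ with standard basis $x_1,\ldots,x_n$, $SV=\mathbb{C}[x_1,\ldots,x_n]$ its symmetric algebra, and let $G$ be the group of all diagonal matrices $g\in SL_n(\mathbb{C})$ with $g^\ell=1$, acting on $SV$. For $i=1,\ldots,n$ (indices mod $n$) let $g_i\in G$ be given by $g_i(x_i)=\zeta x_i$, $g_i(x_{i+1})=\zeta^{-1}x_{i+1}$, $g_i(x_j)=x_j$ otherwise; $g_1,\ldots,g_{n-1}$ freely generate $G\cong(\mathbb{Z}/\ell\mathbb{Z})^{n-1}$. Define the 2-cocycle $\alpha$ by $\alpha(g_1^{i_1}\cdots g_{n-1}^{i_{n-1}},g_1^{j_1}\cdots g_{n-1}^{j_{n-1}})=\zeta^{-i_1j_2-\cdots-i_{n-2}j_{n-1}}$. $SV\#_\alpha G$ is $SV\otimes\mathbb{C}G$ with product $(r\otimes g)(s\otimes h)=\alpha(g,h)\,r\,(g\cdot s)\otimes gh$. *)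

(* Defs.v *)
From HB Require Import structures.
From mathcomp Require Import all_boot all_order all_algebra.
Set Implicit Arguments. Unset Strict Implicit. Unset Printing Implicit Defensive.
Import Order.TTheory GRing.Theory Num.Theory.
Local Open Scope ring_scope.

(* ---------- The polynomial ring SV = F[x_0, ..., x_(n-1)] ----------
   Built as the iterated univariate polynomial ring
   F[x_0][x_1]...[x_(n-1)]  (0-based variable indices). *)
Fixpoint mpoly (F : comNzRingType) (n : nat) : comNzRingType :=
  match n with
  | 0 => F
  | m.+1 => ({poly mpoly F m} : comNzRingType)
  end.

Fixpoint cst (F : comNzRingType) (m : nat) : F -> mpoly F m :=
  match m return F -> mpoly F m with
  | 0 => fun a => a
  | m'.+1 => fun a => ((cst m' a)%:P : {poly mpoly F m'})
  end.

(* the variable x_j in F[x_0..x_(m-1)]  (0 if j >= m, never used) *)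
Fixpoint var (F : comNzRingType) (m : nat) (j : nat) : mpoly F m :=
  match m return mpoly F m with
  | 0 => 0
  | m'.+1 => (if j == m' then 'X else (var F m' j)%:P : {poly mpoly F m'})
  end.

Fixpoint subst (F : comNzRingType) (N : nat) (ys : nat -> mpoly F N) (m : nat)
  : mpoly F m -> mpoly F N :=
  match m return mpoly F m -> mpoly F N with
  | 0 => fun a => cst N a
  | m'.+1 => fun p : {poly mpoly F m'} =>
      \sum_(i < size p) subst ys p`_i * ys m' ^+ i
  end.

(* ---------- The group G ----------
   G = (Z/lZ)^(n-1): g = g_1^(i_1) ... g_(n-1)^(i_(n-1)) is represented by
   its exponent vector (i_1, ..., i_(n-1)), stored 0-based as
   (g 0, ..., g (n-2)). *)
Definition grp (n l : nat) := {ffun 'I_n.-1 -> 'Z_l}.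

Definition gmul (n l : nat) (g h : grp n l) : grp n l := [ffun k => g k + h k].
Definition gone (n l : nat) : grp n l := [ffun _ => 0].

(* exponent of the (k+1)-st generator (0-based k), 0 out of range *)
Definition gexp (n l : nat) (g : grp n l) (k : nat) : nat :=
  match (insub k : option 'I_n.-1) with Some i => val (g i) | None => 0%N end.

(* Scalar by which the generator g_(k+1) (0-based k) acts on x_j (0-based):
   zeta on x_k, zeta^-1 on x_(k+1), 1 otherwise. *)
Definition gen_char (F : fieldType) (zeta : F) (k j : nat) : F :=
  if j == k then zeta else if j == k.+1 then zeta^-1 else 1.

Definition chi (F : fieldType) (n l : nat) (zeta : F) (g : grp n l) (j : nat) : F :=
  \prod_(k < n.-1) gen_char zeta k j ^+ gexp g k.

Definition act (F : fieldType) (n l : nat) (zeta : F) (g : grp n l)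
  (f : mpoly F n) : mpoly F n :=
  subst (fun j => cst n (chi zeta g j) * var F n j) f.

Definition sv_invariant (F : fieldType) (n l : nat) (zeta : F) (f : mpoly F n) : Prop :=
  forall g : grp n l, act zeta g f = f.

Definition alpha (F : fieldType) (n l : nat) (zeta : F) (g h : grp n l) : F :=
  (\prod_(k < n.-2) zeta ^+ (gexp g k * gexp h k.+1))^-1.

(* ---------- The twisted group algebra SV #_alpha G ----------
   An element  sum_g r_g (x) g  is represented by g |-> r_g. *)
Definition twalg (F : fieldType) (n l : nat) := {ffun grp n l -> mpoly F n}.

(* bilinear extension of (r (x) g)(s (x) h) = alpha(g,h) r (g.s) (x) gh *)
Definition twmul (F : fieldType) (n l : nat) (zeta : F) (a b : twalg F n l)
  : twalg F n l :=
  [ffun k => \sum_(g : grp n l) \sum_(h : grp n l | gmul g h == k)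
               cst n (alpha zeta g h) * a g * act zeta g (b h)].

Definition emb (F : fieldType) (n l : nat) (r : mpoly F n) : twalg F n l :=
  [ffun g => if g == gone n l then r else 0].

Definition gens (F : fieldType) (n l : nat) (j : nat) : mpoly F n :=
  if (j < n)%N then var F n j ^+ l else \prod_(i < n) var F n i.

(* Main.v *)
Require Import Defs.
From HB Require Import structures.
From mathcomp Require Import all_boot all_order all_algebra.
From mathcomp Require Import ring.
Import Order.TTheory GRing.Theory Num.Theory.
Set Implicit Arguments. Unset Strict Implicit.
Local Open Scope ring_scope.

Notation sub ys m := (@subst _ _ ys m).
Section Gen.
Variable F : comNzRingType.

Lemma cstD m (a b : F) : cst m (a + b) = cst m a + cst m b.
Proof. elim: m => [//|m IH] /=; by rewrite IH polyCD. Qed.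
Lemma cstN m (a : F) : cst m (- a) = - cst m a.
Proof. elim: m => [//|m IH] /=; by rewrite IH polyCN. Qed.
Lemma cstM m (a b : F) : cst m (a * b) = cst m a * cst m b.
Proof. elim: m => [//|m IH] /=; by rewrite IH polyCM. Qed.
Lemma cst1 m : cst m (1 : F) = 1.
Proof. elim: m => [//|m IH] /=; by rewrite IH. Qed.
Lemma cst0 m : cst m (0 : F) = 0.
Proof. elim: m => [//|m IH] /=; by rewrite IH. Qed.
Lemma cstX m (a : F) k : cst m (a ^+ k) = cst m a ^+ k.
Proof. elim: k => [|k IH]; first by rewrite !expr0 cst1. by rewrite !exprS cstM IH. Qed.

Lemma subst_morph N (ys : nat -> mpoly F N) m :
  {morph sub ys m : x y / x + y} /\ {morph sub ys m : x y / x * y} /\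
  sub ys m 1 = 1 /\ (forall a, sub ys m (cst m a) = cst N a).
Proof.
elim: m => [|m [fD [fM [f1 fC]]]].
  by split; [exact: cstD|split; [exact: cstM|split; [exact: cst1|]]].
have f0 : sub ys m 0 = 0 by apply: (addrI (sub ys m 0)); rewrite -fD !addr0.
have fN : forall a, sub ys m (-a) = - sub ys m a.
  by move=> c; apply/eqP; rewrite -subr_eq0 opprK -fD addNr f0.
have fA : {morph sub ys m : x y / x - y} by move=> a b; rewrite fD fN.
pose f := sub ys m.
pose fZ := GRing.isZmodMorphism.Build _ _ f fA.
pose fMo := GRing.isMonoidMorphism.Build _ _ f (conj f1 fM).
pose fR : {rmorphism mpoly F m -> mpoly F N} := HB.pack f fZ fMo.
have E : forall p : {poly mpoly F m}, sub ys m.+1 p = (map_poly fR p).[ys m].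
  move=> p /=.
  rewrite (horner_coef_wide _ (size_poly _ _)).
  by apply: eq_bigr => i _; rewrite coef_map_id0.
split; first by move=> p q; rewrite !E rmorphD hornerD.
split; first by move=> p q; rewrite !E rmorphM hornerM.
split; first by rewrite E rmorph1 hornerC.
move=> a; rewrite E. change (cst m.+1 a) with ((cst m a)%:P : {poly mpoly F m}). rewrite map_polyC hornerC /=. exact: fC.
Qed.

Section Sub.
Variables (N : nat) (ys : nat -> mpoly F N) (m : nat).
Lemma substD : {morph sub ys m : x y / x + y}.
Proof. by case: (subst_morph ys m). Qed.
Lemma substM : {morph sub ys m : x y / x * y}.
Proof. by case: (subst_morph ys m) => _ []. Qed.
Lemma subst1 : sub ys m 1 = 1.
Proof. by case: (subst_morph ys m) => _ [] _ []. Qed.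
Lemma substC a : sub ys m (cst m a) = cst N a.
Proof. by case: (subst_morph ys m) => _ [] _ [] _. Qed.
Lemma subst0 : sub ys m 0 = 0.
Proof. by apply: (addrI (sub ys m 0)); rewrite -substD !addr0. Qed.
Lemma substX p k : sub ys m (p ^+ k) = sub ys m p ^+ k.
Proof. elim: k => [|k IH]; first by rewrite !expr0 subst1. by rewrite !exprS substM IH. Qed.
Lemma subst_sum I (r : seq I) (P : pred I) (G : I -> mpoly F m) :
  sub ys m (\sum_(i <- r | P i) G i) = \sum_(i <- r | P i) sub ys m (G i).
Proof. exact: (big_morph _ substD subst0). Qed.
Lemma subst_prod I (r : seq I) (P : pred I) (G : I -> mpoly F m) :
  sub ys m (\prod_(i <- r | P i) G i) = \prod_(i <- r | P i) sub ys m (G i).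
Proof. exact: (big_morph _ substM subst1). Qed.
End Sub.

Lemma eq_subst N (ys ys' : nat -> mpoly F N) m :
  (forall j, (j < m)%N -> ys j = ys' j) -> sub ys m =1 sub ys' m.
Proof.
elim: m => [//|m IH] H p /=.
apply: eq_bigr => i _; rewrite H // IH // => j lj; apply: H; exact: ltnW.
Qed.

Lemma subst_lift N (ys : nat -> mpoly F N) m (q : mpoly F m) :
  sub (fun j => ((ys j)%:P : mpoly F N.+1)) m q = ((sub ys m q)%:P : mpoly F N.+1).
Proof.
elim: m q => [//|m IH] q /=.
rewrite rmorph_sum; apply: eq_bigr => i _.
by rewrite IH rmorphM rmorphXn.
Qed.

Lemma var_lt m j : (j < m)%N -> var F m.+1 j = ((var F m j)%:P : {poly mpoly F m}).
Proof. by move=> lj /=; rewrite ifN // neq_ltn lj. Qed.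

Lemma subst_var_id m (f : mpoly F m) : sub (var F m) m f = f.
Proof.
elim: m f => [//|m IH] p /=.
rewrite -[RHS]coefK poly_def; apply: eq_bigr => i _.
rewrite (@eq_subst _ _ (fun j => ((var F m j)%:P : mpoly F m.+1))); last first.
  by move=> j lj; rewrite ifN // neq_ltn lj.
by rewrite subst_lift IH eqxx mul_polyC.
Qed.

Lemma subst_wide N (ys : nat -> mpoly F N) m (p : {poly mpoly F m}) k :
  (size p <= k)%N -> sub ys m.+1 p = \sum_(i < k) sub ys m p`_i * ys m ^+ i.
Proof.
move=> sk /=.
rewrite (big_ord_widen k (fun i => sub ys m p`_i * ys m ^+ i)) // big_mkcond.
apply: eq_bigr => i _; case: ifP => // /negbT; rewrite -leqNgt => h.
by rewrite nth_default // subst0 mul0r.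
Qed.

Lemma substPC N (ys : nat -> mpoly F N) m (c : mpoly F m) :
  sub ys m.+1 (c%:P : {poly mpoly F m}) = sub ys m c.
Proof.
by rewrite (subst_wide _ (k:=1)) ?size_polyC ?leq_b1 // big_ord1 coefC /= expr0 mulr1.
Qed.

Lemma substPX N (ys : nat -> mpoly F N) m :
  sub ys m.+1 ('X : {poly mpoly F m}) = ys m.
Proof.
rewrite (subst_wide _ (k:=2)) ?size_polyX // big_ord_recr big_ord1 /= !coefX /=.
by rewrite subst0 subst1 mul0r add0r mul1r expr1.
Qed.

Lemma subst_var N (ys : nat -> mpoly F N) m j :
  (j < m)%N -> sub ys m (var F m j) = ys j.
Proof.
elim: m => [//|m IH] lj.
case: (ltngtP j m) => [ljm|ljm|->].
- by rewrite var_lt // substPC IH.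
- by rewrite ltnS leqNgt ljm in lj.
- by rewrite [var F m.+1 m]/= eqxx substPX.
Qed.

Lemma subst_comp N N' (ys : nat -> mpoly F N) (ys' : nat -> mpoly F N') m p :
  sub ys' N (sub ys m p) = sub (fun j => sub ys' N (ys j)) m p.
Proof.
elim: m p => [|m IH] p /=; first exact: substC.
rewrite subst_sum; apply: eq_bigr => i _.
by rewrite substM substX IH.
Qed.
End Gen.

Fixpoint mc (F : comNzRingType) (m : nat) : mpoly F m -> (nat -> nat) -> F :=
  match m return mpoly F m -> (nat -> nat) -> F with
  | 0 => fun a _ => a
  | m'.+1 => fun (p : {poly mpoly F m'}) e => mc (p`_(e m')) e
  end.

Definition sc (F : comNzRingType) (c : nat -> F) m (f : mpoly F m) : mpoly F m :=
  sub (fun j => cst m (c j) * var F m j) m f.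

Section MC.
Variable F : comNzRingType.

Lemma mc_eq m (f : mpoly F m) e e' : (forall j, (j < m)%N -> e j = e' j) -> mc f e = mc f e'.
Proof.
elim: m f => [//|m IH] p H /=.
rewrite H // IH // => j lj; apply: H; exact: ltnW.
Qed.

Lemma mc0 m e : mc (0 : mpoly F m) e = 0.
Proof. elim: m => [//|m IH] /=; by rewrite coef0 IH. Qed.

Definition setf (e : nat -> nat) k v := fun j => if j == k then v else e j.

Lemma mc_ext m (f g : mpoly F m) : (forall e, mc f e = mc g e) -> f = g.
Proof.
elim: m f g => [|m IH] f g H; first exact: (H (fun _ => 0%N)).
apply/polyP => i; apply: IH => e.
have := H (setf e m i); rewrite /= /setf eqxx.
rewrite (mc_eq (f`_i) (e' := e)); last by move=> j lj; rewrite ifN // neq_ltn lj.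
by rewrite (mc_eq (g`_i) (e' := e)) // => j lj; rewrite ifN // neq_ltn lj.
Qed.

Lemma mc_mulC m (q : mpoly F m) a e : mc (q * cst m a) e = mc q e * a.
Proof.
elim: m q => [//|m IH] q /=.
by rewrite coefMC IH.
Qed.

Lemma var_reg m j (p : mpoly F m) : (j < m)%N -> var F m j * p = 0 -> p = 0.
Proof.
elim: m p => [//|m IH] p lj.
case: (ltngtP j m) => [ljm|ljm|->].
- rewrite var_lt // => H; apply/polyP => i; rewrite coef0; apply: (IH _ ljm).
  by rewrite -coefCM H coef0.
- by rewrite ltnS leqNgt ljm in lj.
- rewrite [var F m.+1 m]/= eqxx mulrC => H; apply/polyP => i.
  have := congr1 (fun q : {poly mpoly F m} => q`_i.+1) H; rewrite /= coefMX /= => ->.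
  by rewrite !coef0.
Qed.

Lemma sc_coef (c : nat -> F) m (p : {poly mpoly F m}) i :
  (sc c (m := m.+1) p)`_i = sc c p`_i * cst m (c m) ^+ i.
Proof.
rewrite /sc (subst_wide _ (leqnn _)).
have E : forall k : 'I_(size p),
  sub (fun j => cst m.+1 (c j) * var F m.+1 j) m p`_k *
    (cst m.+1 (c m) * var F m.+1 m) ^+ k =
  (sub (fun j => cst m (c j) * var F m j) m p`_k * cst m (c m) ^+ k) *: 'X^k.
  move=> k.
  rewrite (@eq_subst _ _ _ (fun j => ((cst m (c j) * var F m j)%:P : mpoly F m.+1))); last first.
    by move=> j lj; rewrite var_lt // /= polyCM.
  rewrite subst_lift [var F m.+1 m]/= eqxx /= exprMn.
  by rewrite -mul_polyC rmorphM rmorphXn mulrA.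
rewrite (eq_bigr _ (fun k _ => E k)).
rewrite -(@poly_def _ (size p) (fun k => sub (fun j => cst m (c j) * var F m j) m p`_k * cst m (c m) ^+ k)) coef_poly.
case: ifP => // /negbT; rewrite -leqNgt => h.
by rewrite nth_default // subst0 mul0r.
Qed.

Lemma mc_sc (c : nat -> F) m (f : mpoly F m) e :
  mc (sc c f) e = (\prod_(j < m) c j ^+ e j) * mc f e.
Proof.
elim: m f => [|m IH] f; first by rewrite big_ord0 mul1r /sc /=.
rewrite [LHS]/= sc_coef -cstX mc_mulC IH big_ord_recr /=.
by rewrite mulrAC.
Qed.
End MC.

Section Grp.
Variables (F : fieldType) (n l : nat) (zeta : F).
Hypothesis (hn : (3 <= n)%N) (hl : (2 <= l)%N) (hz : l.-primitive_root zeta).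

Lemma zeta_neq0 : zeta != 0.
Proof.
apply/negP => /eqP z0; have := prim_expr_order hz.
by rewrite z0 expr0n; case: l hl => // l' _; move/eqP; rewrite eq_sym oner_eq0.
Qed.

Lemma gexpE (g : grp n l) (i : 'I_n.-1) : gexp g i = val (g i).
Proof. by rewrite /gexp; case: insubP => [j _ /val_inj ->|] //; rewrite ltn_ord. Qed.

Lemma gexp_out (g : grp n l) k : (n.-1 <= k)%N -> gexp g k = 0%N.
Proof. by move=> h; rewrite /gexp insubN // -leqNgt. Qed.

Lemma gexp_lt (g : grp n l) k : (gexp g k < l)%N.
Proof.
case: (ltnP k n.-1) => h; last by rewrite gexp_out // (ltn_trans _ hl).
by rewrite (gexpE g (Ordinal h)) -[X in (_ < X)%N](Zp_cast hl) ltn_ord.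
Qed.

Lemma gexp1 k : gexp (gone n l) k = 0%N.
Proof.
case: (ltnP k n.-1) => h; last by rewrite gexp_out.
by rewrite (gexpE _ (Ordinal h)) ffunE.
Qed.

Lemma chi1 j : chi zeta (gone n l) j = 1.
Proof. by rewrite /chi big1 // => k _; rewrite gexp1 expr0. Qed.

Lemma alpha1g h : alpha zeta (gone n l) h = 1.
Proof. by rewrite /alpha big1 ?invr1 // => k _; rewrite gexp1 mul0n expr0. Qed.

Lemma alphag1 g : alpha zeta g (gone n l) = 1.
Proof. by rewrite /alpha big1 ?invr1 // => k _; rewrite gexp1 muln0 expr0. Qed.

Lemma gmul1g h : gmul (gone n l) h = h.
Proof. by apply/ffunP => i; rewrite !ffunE add0r. Qed.

Lemma gmulg1 g : gmul g (gone n l) = g.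
Proof. by apply/ffunP => i; rewrite !ffunE addr0. Qed.

Lemma act1 (f : mpoly F n) : act zeta (gone n l) f = f.
Proof.
rewrite /act (@eq_subst _ _ _ (var F n)) ?subst_var_id // => j _.
by rewrite chi1 cst1 mul1r.
Qed.

Lemma act0 (g : grp n l) : act zeta g (0 : mpoly F n) = 0.
Proof. exact: subst0. Qed.

Lemma act_var (g : grp n l) j : (j < n)%N ->
  act zeta g (var F n j) = cst n (chi zeta g j) * var F n j.
Proof. by move=> lj; rewrite /act subst_var. Qed.

Lemma gen_char_l k j : gen_char zeta k j ^+ l = 1.
Proof.
rewrite /gen_char; case: ifP => _; first exact: prim_expr_order hz.
case: ifP => _; last exact: expr1n.
by rewrite exprVn (prim_expr_order hz) invr1.
Qed.

Lemma chi_l (g : grp n l) j : chi zeta g j ^+ l = 1.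
Proof.
by rewrite /chi -prodrXl big1 // => k _; rewrite exprAC gen_char_l expr1n.
Qed.

Lemma prod_gen_char k : (k < n.-1)%N -> \prod_(j < n) gen_char zeta k j = 1.
Proof.
move=> lk.
have lk1 : (k < n)%N by apply: (leq_trans lk); apply: leq_pred.
have lk2 : (k.+1 < n)%N by rewrite -(ltn_predK hn) ltnS.
rewrite (bigD1 (Ordinal lk1)) //= (bigD1 (Ordinal lk2)) //=; last first.
  by apply/negP => /eqP/(congr1 val) /= /eqP; rewrite (gtn_eqF (ltnSn k)).
rewrite [X in _ * (_ * X)]big1; last first.
  move=> j /andP[h1 h2]; rewrite /gen_char.
  have -> : (j == k :> nat) = false by apply/negbTE; apply: contra h1 => /eqP h; apply/eqP/val_inj.
  by have -> : (j == k.+1 :> nat) = false by apply/negbTE; apply: contra h2 => /eqP h; apply/eqP/val_inj.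
rewrite /gen_char eqxx /= eqn_leq ltnn /= eqxx mulr1.
exact: mulfV zeta_neq0.
Qed.

Lemma prod_chi (g : grp n l) : \prod_(j < n) chi zeta g j = 1.
Proof.
rewrite /chi exchange_big /= big1 // => k _.
by rewrite prodrXl prod_gen_char // expr1n.
Qed.

Lemma prod_gen_char_pow k (e : nat -> nat) : (k < n.-1)%N ->
  \prod_(j < n) gen_char zeta k j ^+ e j = zeta ^+ e k * zeta^-1 ^+ e k.+1.
Proof.
move=> lk.
have lk1 : (k < n)%N by apply: (leq_trans lk); apply: leq_pred.
have lk2 : (k.+1 < n)%N by rewrite -(ltn_predK hn) ltnS.
rewrite (bigD1 (Ordinal lk1)) //= (bigD1 (Ordinal lk2)) //=; last first.
  by apply/negP => /eqP/(congr1 val) /= /eqP; rewrite (gtn_eqF (ltnSn k)).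
rewrite [X in _ * (_ * X)]big1; last first.
  move=> j /andP[h1 h2]; rewrite /gen_char.
  have -> : (j == k :> nat) = false by apply/negbTE; apply: contra h1 => /eqP h; apply/eqP/val_inj.
  have -> : (j == k.+1 :> nat) = false by apply/negbTE; apply: contra h2 => /eqP h; apply/eqP/val_inj.
  by rewrite expr1n.
by rewrite /gen_char eqxx /= eqn_leq ltnn /= eqxx mulr1.
Qed.

Definition genr k : grp n l := [ffun i : 'I_n.-1 => if val i == k then 1 else 0].

Lemma gexp_genr k k' : (k < n.-1)%N -> gexp (genr k) k' = (k' == k) :> nat.
Proof.
move=> lk; case: (ltnP k' n.-1) => h; last first.
  by rewrite gexp_out //; case: eqP => // e; move: h; rewrite e leqNgt lk.
by rewrite (gexpE _ (Ordinal h)) ffunE /=; case: eqP => //= _.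
Qed.

Lemma chi_genr k j : (k < n.-1)%N -> chi zeta (genr k) j = gen_char zeta k j.
Proof.
move=> lk; rewrite /chi (bigD1 (Ordinal lk)) //= big1 ?mulr1.
  by rewrite gexp_genr // eqxx expr1.
move=> k' nk; rewrite gexp_genr //.
have -> : (k' == k :> nat) = false by apply/negbTE; apply: contra nk => /eqP h; apply/eqP/val_inj.
by rewrite expr0.
Qed.

Lemma cong_of_inv (f : mpoly F n) : sv_invariant l zeta f ->
  forall e, mc f e != 0 -> forall k, (k < n.-1)%N -> e k = e k.+1 %[mod l].
Proof.
move=> H e nz k lk.
have := congr1 (fun q => mc q e) (H (genr k)).
change (mc (sc (chi zeta (genr k)) f) e = mc f e -> e k = e k.+1 %[mod l]).
rewrite mc_sc (eq_bigr (fun j : 'I_n => gen_char zeta k j ^+ e j)); last first.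
  by move=> j _; rewrite chi_genr.
rewrite prod_gen_char_pow // -{2}[mc f e]mul1r => /(mulIf nz) h.
apply/eqP; rewrite -(eq_prim_root_expr hz); apply/eqP.
have nz' : zeta ^+ e k.+1 != 0 by rewrite expf_neq0 // zeta_neq0.
by rewrite -[LHS]mulr1 -(mulVf nz') -exprVn mulrA h mul1r.
Qed.

Lemma faithful (g : grp n l) : g != gone n l -> exists2 j, (j < n)%N & chi zeta g j != 1.
Proof.
move=> ng.
have ex : exists k, (k < n.-1)%N && (gexp g k != 0%N).
  have [i gi] : exists i, g i != 0.
    apply/existsP; apply: contraNT ng => /existsPn Hn; apply/eqP/ffunP => i.
    by rewrite ffunE; apply/eqP/negPn/Hn.
  exists (val i); rewrite ltn_ord (gexpE g i) /=.
  by apply: contra gi => /eqP h; apply/eqP/val_inj.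
case: (ex_minnP ex) => k /andP[lk nzk] kmin.
have lk1 : (k < n)%N by apply: (leq_trans lk); apply: leq_pred.
exists k => //.
rewrite /chi (bigD1 (Ordinal lk)) //= big1 ?mulr1; last first.
  move=> k' nk; rewrite /gen_char.
  have -> : (k == k' :> nat) = false.
    by apply/negbTE; apply: contra nk => /eqP h; apply/eqP/val_inj.
  case: ifP => [/eqP ek|_]; last by rewrite expr1n.
  case: (posnP (gexp g k')) => [->|pos]; first by rewrite expr0.
  by have := kmin k'; rewrite ltn_ord -lt0n pos ek ltnn => /(_ isT).
rewrite /gen_char eqxx -(prim_order_dvd hz).
apply/negP => /dvdn_leq; rewrite lt0n nzk leqNgt gexp_lt => /(_ isT) //.
Qed.
End Grp.

Section Center.
Variables (F : fieldType) (n l : nat) (zeta : F).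
Hypothesis (hn : (3 <= n)%N) (hl : (2 <= l)%N) (hz : l.-primitive_root zeta).

Lemma twmul_l (a b : twalg F n l) k :
  (forall g, g != gone n l -> a g = 0) -> twmul zeta a b k = a (gone n l) * b k.
Proof.
move=> Ha; rewrite /twmul ffunE (bigD1 (gone n l)) //= [X in _ + X]big1 ?addr0; last first.
  by move=> g ng; apply: big1 => h _; rewrite (Ha g ng) mulr0 mul0r.
rewrite (big_pred1 k); last by move=> h; rewrite /= gmul1g.
by rewrite alpha1g cst1 mul1r act1.
Qed.

Lemma twmul_r (a b : twalg F n l) k :
  (forall h, h != gone n l -> b h = 0) -> twmul zeta a b k = a k * act zeta k (b (gone n l)).
Proof.
move=> Hb; rewrite /twmul ffunE.
rewrite (eq_bigr (fun g => if g == k then cst n (alpha zeta g (gone n l)) * a g *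
   act zeta g (b (gone n l)) else 0)); last first.
  move=> g _; rewrite big_mkcond (bigD1 (gone n l)) //= gmulg1 big1 ?addr0 // => h nh.
  by case: ifP => // _; rewrite (Hb h nh) act0 mulr0.
by rewrite -big_mkcond big_pred1_eq alphag1 cst1 mul1r.
Qed.

Lemma emb_supp (r : mpoly F n) g : g != gone n l -> emb l r g = 0.
Proof. by move=> ng; rewrite ffunE (negbTE ng). Qed.

Lemma emb1 (r : mpoly F n) : emb l r (gone n l) = r.
Proof. by rewrite ffunE eqxx. Qed.

Lemma center (z : twalg F n l) :
  (forall w : twalg F n l, twmul zeta z w = twmul zeta w z) <->
  (exists2 r : mpoly F n, sv_invariant l zeta r & z = emb l r).
Proof.
split; last first.
  move=> [r inv ->] w; apply/ffunP => k.
  rewrite twmul_l; last exact: emb_supp.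
  rewrite twmul_r; last exact: emb_supp.
  by rewrite !emb1 inv mulrC.
move=> Hc.
have zk0 : forall k, k != gone n l -> z k = 0.
  move=> k nk; have [j lj cj] := faithful hl hz nk.
  have := congr1 (fun w : twalg F n l => w k) (Hc (emb l (var F n j))).
  rewrite twmul_r; last exact: emb_supp.
  rewrite twmul_l; last exact: emb_supp.
  rewrite !emb1 act_var // => E.
  have H0 : var F n j * (z k * cst n (chi zeta k j - 1)) = 0.
    rewrite cstD cstN cst1.
    have -> : var F n j * (z k * (cst n (chi zeta k j) + - 1)) =
      z k * (cst n (chi zeta k j) * var F n j) - var F n j * z k by ring.
    by rewrite E subrr.
  have c1 : chi zeta k j - 1 != 0 by rewrite subr_eq0.
  rewrite -[z k]mulr1 -(cst1 F n) -(mulfV c1) cstM mulrA (var_reg lj H0) mul0r //.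
have zE : z = emb l (z (gone n l)).
  apply/ffunP => k; rewrite ffunE; case: eqP => [->|/eqP nk] //; exact: zk0.
exists (z (gone n l)) => // h; symmetry.
pose d : twalg F n l := [ffun k => if k == h then 1 else 0].
have := congr1 (fun w : twalg F n l => w h) (Hc d).
rewrite twmul_l // twmul_r; last by move=> g ng; rewrite zE emb_supp.
by rewrite ffunE eqxx mulr1 mul1r.
Qed.
End Center.

Section Inv.
Variables (F : fieldType) (n l : nat) (zeta : F).
Hypothesis (hn : (3 <= n)%N) (hl : (2 <= l)%N) (hz : l.-primitive_root zeta).

Lemma act_gens (g : grp n l) j : (j < n.+1)%N ->
  act zeta g (gens F n l j) = gens F n l j.
Proof.
rewrite ltnS leq_eqVlt => /orP[/eqP ->|lj].
  rewrite /gens ltnn /act subst_prod.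
  rewrite (eq_bigr (fun i : 'I_n => cst n (chi zeta g i) * var F n i)); last first.
    by move=> i _; rewrite subst_var.
  rewrite big_split /= -(big_morph _ (@cstM F n) (cst1 F n)).
  by rewrite (prod_chi hn hl hz) cst1 mul1r.
rewrite /gens lj /act substX subst_var // exprMn -cstX.
by rewrite (chi_l hz) cst1 mul1r.
Qed.

Lemma inv_of_subst (P : mpoly F n.+1) : sv_invariant l zeta (sub (gens F n l) n.+1 P).
Proof.
move=> g; rewrite /act subst_comp; apply: eq_subst => j lj.
exact: act_gens.
Qed.

Definition pi m : mpoly F n := \prod_(j < m) var F n j.

Lemma step m (q : mpoly F m) i H : (m < n)%N ->
  sub (var F n) m q = pi m ^+ (i %% l) * sub (gens F n l) n.+1 H ->
  sub (var F n) m q * var F n m ^+ i =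
  pi m.+1 ^+ (i %% l) * sub (gens F n l) n.+1 (H * var F n.+1 m ^+ (i %/ l)).
Proof.
move=> lm ->.
rewrite substM substX subst_var; last by apply: (ltn_trans lm).
have -> : gens F n l m = var F n m ^+ l by rewrite /gens lm.
rewrite /pi big_ord_recr exprMn.
have -> : var F n m ^+ i = (var F n m ^+ l) ^+ (i %/ l) * var F n m ^+ (i %% l).
  by rewrite -exprM -exprD mulnC -divn_eq.
move: (sub (gens F n l) n.+1 H) (\prod_(_ < m) var F n _) => c a.
by ring.
Qed.

Lemma claim m : (m <= n)%N -> forall (f : mpoly F m) r,
  (forall e, mc f e != 0 -> forall j, (j < m)%N -> (e j %% l)%N = r) ->
  exists H : mpoly F n.+1, sub (var F n) m f = pi m ^+ r * sub (gens F n l) n.+1 H.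
Proof.
elim: m => [_ f r _|m IH lm f r hf].
  by exists (@cst F n.+1 f); rewrite substC /pi big_ord0 expr1n mul1r.
have lmn : (m < n)%N by [].
rewrite (subst_wide _ (leqnn _)).
apply: (big_ind (fun x : mpoly F n => exists H, x = pi m.+1 ^+ r * sub (gens F n l) n.+1 H)).
- by exists 0; rewrite subst0 mulr0.
- by move=> x y [H1 ->] [H2 ->]; exists (H1 + H2); rewrite substD mulrDr.
move=> i _.
case: (eqVneq (i %% l)%N r) => [ir|nir].
  have [H HE] : exists H : mpoly F n.+1,
      sub (var F n) m f`_i = pi m ^+ (i %% l) * sub (gens F n l) n.+1 H.
    apply: (IH (ltnW lm)) => e nz j lj.
    have := hf (setf e m i); rewrite /= /setf eqxx.
    rewrite (mc_eq (f`_i) (e' := e)); last by move=> k lk; rewrite ifN // neq_ltn lk.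
    move=> /(_ nz j (ltnW lj)); rewrite ifN ?neq_ltn ?lj // => ->; by rewrite ir.
  exists (H * var F n.+1 m ^+ (i %/ l)).
  by rewrite -ir (step lmn HE).
have -> : f`_i = 0.
  apply: mc_ext => e; rewrite mc0; apply/eqP; apply: contraR nir => nz.
  have := hf (setf e m i); rewrite /= /setf eqxx.
  rewrite (mc_eq (f`_i) (e' := e)); last by move=> k lk; rewrite ifN // neq_ltn lk.
  by move=> /(_ nz m (ltnSn m)); rewrite eqxx => ->.
by exists 0; rewrite !subst0 mul0r mulr0.
Qed.

Lemma chain (e : nat -> nat) N : (forall k, (k < N)%N -> e k = e k.+1 %[mod l]) ->
  forall d j, (j + d <= N)%N -> (e j %% l = e (j + d) %% l)%N.
Proof.
move=> H; elim=> [j _|d IH j jd]; first by rewrite addn0.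
rewrite H; last by apply: leq_trans jd; rewrite -addSnnS leq_addr.
by rewrite IH addSnnS.
Qed.

End Inv.

Lemma top (F : fieldType) n l (zeta : F) : (3 <= n)%N -> (2 <= l)%N -> l.-primitive_root zeta ->
  forall f : mpoly F n, sv_invariant l zeta f -> exists P : mpoly F n.+1, f = sub (gens F n l) n.+1 P.
Proof.
case: n => [//|n] hn hl hz f inv.
have cong := cong_of_inv hn hl hz inv.
rewrite -[f]subst_var_id.
rewrite (@subst_wide _ _ _ n f (size f) (leqnn _)).
apply: (big_ind (fun x : mpoly F n.+1 => exists P, x = sub (gens F n.+1 l) n.+2 P)).
- by exists 0; rewrite subst0.
- by move=> x y [P1 ->] [P2 ->]; exists (P1 + P2); rewrite substD.
move=> i _.
have [H HE] : exists H : mpoly F n.+2,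
    sub (var F n.+1) n f`_i = pi F n.+1 n ^+ (i %% l) * sub (gens F n.+1 l) n.+2 H.
  apply: (claim (leqnSn n)) => e nz j lj.
  have E1 : mc f (setf e n i) = mc f`_i e.
    rewrite /= {1}/setf eqxx; apply: mc_eq => k lk; rewrite /setf ifN // neq_ltn lk //.
  have ch := cong (setf e n i) (eq_ind_r (fun x => x != 0) nz E1).
  have := @chain l (setf e n i) n ch (n - j)%N j.
  rewrite (subnKC (ltnW lj)) leqnn /setf eqxx ifN; last by rewrite neq_ltn lj.
  by move=> /(_ isT).
exists (var F n.+2 n.+1 ^+ (i %% l) * (H * var F n.+2 n ^+ (i %/ l))).
rewrite (step (ltnSn n) HE) !substM !substX !subst_var //.
by rewrite {3}/gens ltnn.
Qed.

Theorem mainTheorem5 (F : numClosedFieldType) (n l : nat) (zeta : F) :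
  (3 <= n)%N -> (2 <= l)%N -> l.-primitive_root zeta ->
  (forall z : twalg F n l,
      (forall w : twalg F n l, twmul zeta z w = twmul zeta w z) <->
      (exists2 r : mpoly F n, sv_invariant l zeta r & z = emb l r))
  /\
  (forall f : mpoly F n,
      sv_invariant l zeta f <->
      (exists P : mpoly F n.+1, f = subst (gens F n l) P)).
Proof.
move=> hn hl hz; split; first exact: center hl hz.
move=> f; split.
  move=> H; have := top hn hl hz H; exact: id.
case=> P ->; have := inv_of_subst hn hl hz P; exact: id.
Qed.
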